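(* Let $p$ be an odd prime, $\zeta$ a primitive $p$-th root of unity, $K=\mathbf{Q}_p(\zeta)$, $K^+=\mathbf{Q}_p(\zeta+\zeta^{-1})$, $\mathfrak{o}=\mathbf{Z}_p[\zeta]$, $\pi=1-\zeta$, and $U_n=\{\alpha\in\mathfrak{o}^\times:\alpha\equiv1\pmod{\pi^n}\}$ for $n>0$. If $\alpha\in U_{p-1}\cap K^+$ and $N_{K|\mathbf{Q}_p}(\alpha)\equiv1\pmod{p\pi}$, then $\alpha\in U_{p+1}$ (and in particular $\alpha\in\mathfrak{o}^{\times p}$). *)

(* Defs.v *)
(* Model of o = Z_p[zeta] as the inverse limit  lim_k Z[x]/(p^k, Phi_p(x)),
   i.e. an element of o is a compatible sequence (a k)_k of integer polynomials,
   a k being a representative of the element modulo p^k (zeta = class of x). *)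
From HB Require Import structures.
From mathcomp Require Import all_boot all_order all_algebra.
Set Implicit Arguments. Unset Strict Implicit. Unset Printing Implicit Defensive.
Import Order.TTheory GRing.Theory Num.Theory.
Local Open Scope ring_scope.

Definition Phi (p : nat) : {poly int} := \sum_(i < p) 'X^i.

Definition piZ : {poly int} := 1 - 'X.

(* f = h modulo the ideal (g, p^k, Phi_p) of Z[x]: i.e. f = h mod g in Z[zeta]/p^k *)
Definition congr_at (p k : nat) (g f h : {poly int}) : Prop :=
  exists a b c : {poly int},
    f - h = a * g + b * ((p ^ k)%N%:R : int)%:P + c * Phi p.

Definition is_elt (p : nat) (a : nat -> {poly int}) : Prop :=
  forall k, congr_at p k 0 (a k.+1) (a k).

Definition oeq (p : nat) (a b : nat -> {poly int}) : Prop :=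
  forall k, congr_at p k 0 (a k) (b k).

Definition ocong (p : nat) (g : {poly int}) (a b : nat -> {poly int}) : Prop :=
  forall k, congr_at p k g (a k) (b k).

Definition ounit (p : nat) (a : nat -> {poly int}) : Prop :=
  exists b, is_elt p b /\ oeq p (fun k => a k * b k) (fun _ => 1).

Definition inU (p n : nat) (a : nat -> {poly int}) : Prop :=
  ounit p a /\ ocong p (piZ ^+ n) a (fun _ => 1).

(* alpha in K^+ = Q_p(zeta + zeta^-1): alpha fixed by the automorphism
   zeta |-> zeta^-1 = zeta^(p-1) generating Gal(K|K^+) *)
Definition inKplus (p : nat) (a : nat -> {poly int}) : Prop :=
  oeq p (fun k => a k \Po 'X^(p.-1)) a.

(* N_{K|Q_p}(alpha) = prod_{j=1}^{p-1} sigma_j(alpha), sigma_j : zeta |-> zeta^j *)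
Definition normK (p : nat) (a : nat -> {poly int}) : nat -> {poly int} :=
  fun k => \prod_(1 <= j < p) (a k \Po 'X^j).

(* Main.v *)
Require Import Defs.
From HB Require Import structures.
From mathcomp Require Import all_boot all_order all_algebra.
From Stdlib Require Import ClassicalEpsilon.
Import Order.TTheory GRing.Theory Num.Theory.
Local Open Scope ring_scope.


Notation PK p k := (((p ^ k)%N%:R : int)%:P).

Definition inI (p k : nat) (g f : {poly int}) : Prop :=
  exists a b c : {poly int}, f = a * g + b * PK p k + c * Phi p.

Lemma cgE p k g f h : congr_at p k g f h <-> inI p k g (f - h).
Proof. by []. Qed.

Section Ideal.
Implicit Types (f g h : {poly int}).

Lemma inI0 p k g : inI p k g 0.
Proof. by exists 0, 0, 0; rewrite !mul0r !addr0. Qed.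

Lemma inID p k g f1 f2 : inI p k g f1 -> inI p k g f2 -> inI p k g (f1 + f2).
Proof.
move=> [a1 [b1 [c1 ->]]] [a2 [b2 [c2 ->]]]; exists (a1+a2), (b1+b2), (c1+c2).
by rewrite !mulrDl addrACA [X in X + _]addrACA.
Qed.

Lemma inIM p k g c f : inI p k g f -> inI p k g (c * f).
Proof.
move=> [a [b [d ->]]]; exists (c*a), (c*b), (c*d).
by rewrite !mulrDr !mulrA.
Qed.

Lemma inIMr p k g c f : inI p k g f -> inI p k g (f * c).
Proof. by rewrite mulrC; apply: inIM. Qed.

Lemma inIN p k g f : inI p k g f -> inI p k g (- f).
Proof. by rewrite -mulN1r; apply: inIM. Qed.

Lemma inIB p k g f1 f2 : inI p k g f1 -> inI p k g f2 -> inI p k g (f1 - f2).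
Proof. by move=> h1 h2; apply: inID => //; apply: inIN. Qed.

Lemma inIg p k g c : inI p k g (c * g).
Proof. by exists c, 0, 0; rewrite !mul0r !addr0. Qed.

Lemma inIP p k g c : inI p k g (c * PK p k).
Proof. by exists 0, c, 0; rewrite !mul0r add0r addr0. Qed.

Lemma inIPhi p k g c : inI p k g (c * Phi p).
Proof. by exists 0, 0, c; rewrite !mul0r !add0r. Qed.

Lemma inI_trans p k g g' f : inI p k g' g -> inI p k g f -> inI p k g' f.
Proof.
move=> hg [a [b [c ->]]]; apply: inID; [apply: inID|].
- exact: inIM.
- exact: inIP.
- exact: inIPhi.
Qed.

Lemma inI_lev p k k' g f : (k <= k')%N -> inI p k' g f -> inI p k g f.
Proof.
move=> hk [a [b [c ->]]]; apply: inID; [apply: inID|].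
- exact: inIg.
- have -> : PK p k' = PK p (k' - k) * PK p k.
    by rewrite -polyCM -natrM -expnD subnK.
  by rewrite mulrA; apply: inIP.
- exact: inIPhi.
Qed.

Lemma inI_mulg p k g f w : inI p k g f -> inI p k (g * w) (f * w).
Proof.
move=> [a [b [c ->]]]; exists a, (b * w), (c * w).
rewrite !mulrDl; congr (_ + _ + _); rewrite -!mulrA //; congr (_ * _); exact: mulrC.
Qed.

Lemma inIMM p k g g' f f' : inI p k g f -> inI p k g' f' -> inI p k (g * g') (f * f').
Proof.
move=> [a [b [c ->]]] h'.
rewrite mulrDl mulrDl; apply: inID; [apply: inID|].
- rewrite -mulrA; apply: inIM; rewrite [g * f']mulrC [g * g']mulrC; exact: inI_mulg.
- rewrite mulrAC; exact: inIP.
- rewrite mulrAC; exact: inIPhi.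
Qed.

Lemma inIX p k g f n : inI p k g f -> inI p k (g ^+ n) (f ^+ n).
Proof.
move=> h; elim: n => [|n IH]; first by rewrite !expr0; exists 1, 0, 0; rewrite !mul0r !addr0 mulr1.
by rewrite !exprS; apply: inIMM.
Qed.

Lemma inI_0g p k g f : inI p k 0 f -> inI p k g f.
Proof. by apply: inI_trans; apply: inI0. Qed.

Lemma inI_lev0 p g f : inI p 0 g f.
Proof. by exists 0, f, 0; rewrite expn0 mulr1 !mul0r add0r addr0. Qed.

Lemma inI_sum p k g (I : Type) (r : seq I) (P : pred I) (F : I -> {poly int}) :
  (forall i, P i -> inI p k g (F i)) -> inI p k g (\sum_(i <- r | P i) F i).
Proof. move=> h; apply: big_ind => //; [exact: inI0 | exact: inID]. Qed.

Lemma cg_refl p k g f : congr_at p k g f f.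
Proof. by apply/cgE; rewrite subrr; apply: inI0. Qed.

Lemma cg_sym p k g f h : congr_at p k g f h -> congr_at p k g h f.
Proof. by move/cgE=> H; apply/cgE; rewrite -opprB; apply: inIN. Qed.

Lemma cg_trans p k g f h l : congr_at p k g f h -> congr_at p k g h l -> congr_at p k g f l.
Proof.
move/cgE=> H1 /cgE H2; apply/cgE.
have -> : f - l = (f - h) + (h - l) by rewrite addrA subrK.
exact: inID.
Qed.

Lemma cg_add p k g f1 h1 f2 h2 : congr_at p k g f1 h1 -> congr_at p k g f2 h2 ->
  congr_at p k g (f1 + f2) (h1 + h2).
Proof.
move/cgE=> H1 /cgE H2; apply/cgE.
by rewrite opprD addrACA; apply: inID.
Qed.

Lemma cg_opp p k g f h : congr_at p k g f h -> congr_at p k g (- f) (- h).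
Proof. by move/cgE=> H; apply/cgE; rewrite -opprD; apply: inIN. Qed.

Lemma cg_sub p k g f1 h1 f2 h2 : congr_at p k g f1 h1 -> congr_at p k g f2 h2 ->
  congr_at p k g (f1 - f2) (h1 - h2).
Proof. by move=> H1 H2; apply: cg_add => //; apply: cg_opp. Qed.

Lemma cg_mull p k g c f h : congr_at p k g f h -> congr_at p k g (c * f) (c * h).
Proof. by move/cgE=> H; apply/cgE; rewrite -mulrBr; apply: inIM. Qed.

Lemma cg_mul p k g f1 h1 f2 h2 : congr_at p k g f1 h1 -> congr_at p k g f2 h2 ->
  congr_at p k g (f1 * f2) (h1 * h2).
Proof.
move=> H1 H2; apply: (@cg_trans _ _ _ _ (f1 * h2)); first exact: cg_mull.
by rewrite ![_ * h2]mulrC; apply: cg_mull.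
Qed.

Lemma cg_exp p k g f h n : congr_at p k g f h -> congr_at p k g (f ^+ n) (h ^+ n).
Proof.
move=> H; elim: n => [|n IH]; first by rewrite !expr0; apply: cg_refl.
by rewrite !exprS; apply: cg_mul.
Qed.

Lemma cg_sum p k g (I : Type) (r : seq I) (P : pred I) (F G : I -> {poly int}) :
  (forall i, P i -> congr_at p k g (F i) (G i)) ->
  congr_at p k g (\sum_(i <- r | P i) F i) (\sum_(i <- r | P i) G i).
Proof. move=> h; apply: (big_ind2 (congr_at p k g)) => //; [exact: cg_refl | exact: cg_add]. Qed.

Lemma cg_prod p k g (I : Type) (r : seq I) (P : pred I) (F G : I -> {poly int}) :
  (forall i, P i -> congr_at p k g (F i) (G i)) ->
  congr_at p k g (\prod_(i <- r | P i) F i) (\prod_(i <- r | P i) G i).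
Proof. move=> h; apply: (big_ind2 (congr_at p k g)) => //; [exact: cg_refl | exact: cg_mul]. Qed.

Lemma cg_ideal p k g g' f h : inI p k g' g -> congr_at p k g f h -> congr_at p k g' f h.
Proof. by move=> hg /cgE H; apply/cgE; apply: inI_trans hg H. Qed.

Lemma cg_0g p k g f h : congr_at p k 0 f h -> congr_at p k g f h.
Proof. by move/cgE/(@inI_0g p k g) => H; apply/cgE. Qed.

Lemma cg_lev p k k' g f h : (k <= k')%N -> congr_at p k' g f h -> congr_at p k g f h.
Proof. by move=> hk /cgE H; apply/cgE; apply: inI_lev hk H. Qed.

Lemma cg_mulg p k g f h w : congr_at p k g f h -> congr_at p k (g * w) (f * w) (h * w).
Proof. by move/cgE=> H; apply/cgE; rewrite -mulrBl; apply: inI_mulg. Qed.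

Lemma cg_gen p k g c : congr_at p k g (c * g) 0.
Proof. by apply/cgE; rewrite subr0; apply: inIg. Qed.

End Ideal.

Arguments cg_sym {p k g f h}.
Arguments cg_trans {p k g f h l}.
Arguments cg_add {p k g f1 h1 f2 h2}.
Arguments cg_opp {p k g f h}.
Arguments cg_sub {p k g f1 h1 f2 h2}.
Arguments cg_mull {p k g} c {f h}.
Arguments cg_mul {p k g f1 h1 f2 h2}.
Arguments cg_exp {p k g f h} n.
Arguments cg_ideal {p k g g' f h}.
Arguments cg_0g {p k} g {f h}.
Arguments cg_lev {p k k' g f h}.
Arguments cg_mulg {p k g f h} w.


Definition inPhi (p : nat) (f : {poly int}) := exists q, f = q * Phi p.

Lemma inPhi0 p : inPhi p 0. Proof. by exists 0; rewrite mul0r. Qed.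
Lemma inPhiD p f g : inPhi p f -> inPhi p g -> inPhi p (f + g).
Proof. by move=> [q1 ->] [q2 ->]; exists (q1 + q2); rewrite mulrDl. Qed.
Lemma inPhiM p c f : inPhi p f -> inPhi p (c * f).
Proof. by move=> [q ->]; exists (c * q); rewrite mulrA. Qed.
Lemma inPhi_sum p (I : Type) (r : seq I) (P : pred I) (F : I -> {poly int}) :
  (forall i, P i -> inPhi p (F i)) -> inPhi p (\sum_(i <- r | P i) F i).
Proof. move=> h; apply: big_ind => //; [exact: inPhi0 | exact: inPhiD]. Qed.

Lemma XpPhi p : 'X^p - 1 = ('X - 1) * Phi p :> {poly int}.
Proof. by rewrite /Phi subrX1. Qed.

Lemma Xn_mod p n : inPhi p ('X^n - 'X^(n %% p)).
Proof.
have e := divn_eq n p; rewrite {1}e exprD mulnC exprM.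
set q := (n %/ p)%N.
have -> : ('X^p) ^+ q * 'X^(n %% p) - 'X^(n %% p) = 'X^(n %% p) * (('X^p) ^+ q - 1) :> {poly int}.
  by rewrite mulrBr mulr1 mulrC.
apply: inPhiM; rewrite subrX1 XpPhi mulrC mulrA; by eexists.
Qed.

Lemma comp_polyXn (f q : {poly int}) n : (f ^+ n) \Po q = (f \Po q) ^+ n.
Proof.
elim: n => [|n IH]; first by rewrite !expr0 -polyC1 comp_polyC.
by rewrite !exprS comp_polyM IH.
Qed.

Lemma comp_sum (I : Type) (r : seq I) (P : pred I) (F : I -> {poly int}) q :
  (\sum_(i <- r | P i) F i) \Po q = \sum_(i <- r | P i) (F i \Po q).
Proof.
apply: (big_ind2 (fun x y => x \Po q = y)) => //; first by rewrite comp_poly0.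
by move=> a b c d <- <-; rewrite comp_polyD.
Qed.

Lemma Phi_comp p j : prime p -> (0 < j < p)%N -> inPhi p (Phi p \Po 'X^j).
Proof.
move=> pp /andP [j0 jp].
have p0 : (0 < p)%N by apply: prime_gt0.
rewrite /Phi comp_sum.
pose h (i : 'I_p) : 'I_p := Ordinal (ltn_pmod (j * i) p0).
have hinj : injective h.
  have key : forall i1 i2 : 'I_p, (i1 <= i2)%N -> h i1 = h i2 -> i1 = i2.
    move=> i1 i2 le12 /(congr1 val) /= /eqP e.
    have : (j * i2 == j * i1 %[mod p]) by rewrite eq_sym.
    rewrite eqn_mod_dvd ?leq_mul2l ?le12 ?orbT // -mulnBr Gauss_dvdr; last first.
      by rewrite prime_coprime // gtnNdvd.
    move=> hd; apply/val_inj/eqP; rewrite eqn_leq le12 /=.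
    have : (i2 - i1 < p)%N by apply: leq_ltn_trans (leq_subr _ _) (ltn_ord i2).
    case e2: (i2 - i1)%N => [|d]; first by move=> _; rewrite -subn_eq0 e2.
    by move=> dlt; move: hd; rewrite e2 gtnNdvd.
  move=> i1 i2 e; case: (leqP i1 i2) => le12; first exact: key.
  by apply/esym/key => //; apply: ltnW.
have -> : \sum_(i < p) ('X^i \Po 'X^j) =
   \sum_(i < p) ('X^(j * i) - 'X^((j * i) %% p)) + \sum_(i < p) 'X^(h i) :> {poly int}.
  rewrite -big_split /=; apply: eq_bigr => i _.
  by rewrite comp_polyXn comp_polyX -exprM mulnC subrK.
have -> : \sum_(i < p) 'X^(h i) = 1 * Phi p :> {poly int}.
  by rewrite mul1r /Phi; symmetry; exact: (reindex_inj hinj).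
apply: inPhiD; last by exists 1.
by apply: inPhi_sum => i _; apply: Xn_mod.
Qed.

Lemma inI_comp p k g f j : prime p -> (0 < j < p)%N ->
  inI p k g f -> inI p k (g \Po 'X^j) (f \Po 'X^j).
Proof.
move=> pp hj [a [b [c ->]]].
have [q hq] := @Phi_comp p j pp hj.
rewrite !comp_polyD !comp_polyM comp_polyC hq mulrA.
apply: inID; [apply: inID|]; [exact: inIg | exact: inIP | exact: inIPhi].
Qed.

Lemma cg_comp p k g f h j : prime p -> (0 < j < p)%N ->
  congr_at p k g f h -> congr_at p k (g \Po 'X^j) (f \Po 'X^j) (h \Po 'X^j).
Proof. by move=> pp hj /cgE H; apply/cgE; rewrite -comp_polyB; apply: inI_comp. Qed.


Notation pP p := ((p%:R : int)%:P).

Lemma Phi_binom p : Phi p = \sum_(i < p) ('X - 1) ^+ i *+ 'C(p, i.+1) :> {poly int}.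
Proof.
apply: (@mulfI _ ('X - 1)); first by rewrite -polyC1 polyXsubC_eq0.
rewrite -XpPhi mulr_sumr.
have -> : 'X^p = (('X - 1) + 1) ^+ p :> {poly int} by rewrite subrK.
rewrite exprD1n big_ord_recl /= expr0 bin0 mulr1n addrC addKr.
by apply: eq_bigr => i _; rewrite exprS mulrnAr.
Qed.

Lemma Phi_expand p : prime p -> odd p ->
  exists T, pP p + piZ ^+ p.-1 + pP p * piZ * T = Phi p.
Proof.
move=> pp op.
have p2 : (2 <= p)%N by apply: prime_gt1.
move: pp op; case: p p2 => [|[|m]] // _ pp op.
rewrite Phi_binom big_ord_recl big_ord_recr.
exists (\sum_(i < m) - (('X - 1) ^+ i *+ ('C(m.+2, i.+2) %/ m.+2))).
rewrite -addrA [piZ ^+ _ + _]addrC; congr (_ + (_ + _)).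
- by rewrite expr0 bin1 polyC_natr.
- rewrite mulr_sumr; apply: eq_bigr => i _ /=; rewrite /bump /= add1n.
  have hd : (m.+2 %| 'C(m.+2, i.+2))%N.
    by apply: prime_dvd_bin => //=; rewrite !ltnS ltn_ord.
  set c := ('C(m.+2, i.+2) %/ m.+2)%N.
  have e : 'C(m.+2, i.+2) = (c * m.+2)%N by rewrite divnK.
  rewrite e mulrnA exprSr polyC_natr.
  have -> : ('X - 1 : {poly int}) = - piZ by rewrite /piZ opprB.
  rewrite mulrN mulrnAr -mulNrn mulrnAC; congr (_ *+ _).
  rewrite mulr_natl mulrnAl -mulNrn; congr (_ *+ _); by rewrite mulrN mulrC.
- rewrite /= binn mulr1n.
  have -> : ('X - 1 : {poly int}) = - piZ by rewrite /piZ opprB.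
  rewrite exprNn -signr_odd /=.
  by move: op => /= /negbTE ->; rewrite expr0 mul1r.
Qed.

Definition inJ (p : nat) (g f : {poly int}) := exists a c, f = a * g + c * Phi p.

Lemma inJ_inI p k g f : inJ p g f -> inI p k g f.
Proof. by move=> [a [c ->]]; exists a, 0, c; rewrite mul0r addr0. Qed.

Lemma inJ0 p g : inJ p g 0.
Proof. by exists 0, 0; rewrite !mul0r addr0. Qed.

Lemma inJD p g f1 f2 : inJ p g f1 -> inJ p g f2 -> inJ p g (f1 + f2).
Proof.
move=> [a1 [c1 ->]] [a2 [c2 ->]]; exists (a1 + a2), (c1 + c2).
by rewrite !mulrDl addrACA.
Qed.

Lemma inJM p g c f : inJ p g f -> inJ p g (c * f).
Proof. by move=> [a [d ->]]; exists (c * a), (c * d); rewrite mulrDr !mulrA. Qed.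

Lemma inJN p g f : inJ p g f -> inJ p g (- f).
Proof. by rewrite -mulN1r; apply: inJM. Qed.

Lemma inJg p g c : inJ p g (c * g).
Proof. by exists c, 0; rewrite mul0r addr0. Qed.

Lemma inJPhi p g c : inJ p g (c * Phi p).
Proof. by exists 0, c; rewrite mul0r add0r. Qed.

Lemma inJMM p g g' f f' : inJ p g f -> inJ p g' f' -> inJ p (g * g') (f * f').
Proof.
move=> [a [c ->]] [a' [c' ->]].
rewrite mulrDl; apply: inJD; last by rewrite mulrAC; apply: inJPhi.
rewrite mulrDr; apply: inJD; first by rewrite mulrACA; apply: inJg.
by rewrite mulrA; apply: inJPhi.
Qed.

Lemma inJX p g f n : inJ p g f -> inJ p (g ^+ n) (f ^+ n).
Proof.
move=> h; elim: n => [|n IH]; first by rewrite !expr0; exists 1, 0; rewrite mul0r addr0 mulr1.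
by rewrite !exprS; apply: inJMM.
Qed.

Lemma inJ_trans p g g' f : inJ p g' g -> inJ p g f -> inJ p g' f.
Proof. by move=> hg [a [c ->]]; apply: inJD; [apply: inJM | apply: inJPhi]. Qed.

Lemma inJ_pow p m n : (m <= n)%N -> inJ p (piZ ^+ m) (piZ ^+ n).
Proof. by move=> h; rewrite -(subnK h) exprD; apply: inJg. Qed.

Lemma inI_pow p k m n : (m <= n)%N -> inI p k (piZ ^+ m) (piZ ^+ n).
Proof. by move=> h; apply: inJ_inI; apply: inJ_pow. Qed.

Lemma cg_pow p k m n f h : (m <= n)%N -> congr_at p k (piZ ^+ n) f h -> congr_at p k (piZ ^+ m) f h.
Proof. by move=> hmn; apply: cg_ideal; apply: inI_pow. Qed.

Section Keys.
Variables (p : nat) (pp : prime p) (op : odd p).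

Lemma p_pi : inJ p (piZ ^+ p.-1) (pP p).
Proof.
have [T hT] := @Phi_expand p pp op.
set y := - (piZ * T).
have e1 : pP p * (1 - y) = Phi p - piZ ^+ p.-1.
  by rewrite -hT /y opprK mulrDr mulr1 mulrA addrAC addrK.
have e2 : pP p = pP p * y ^+ p.-1 + pP p * (1 - y) * \sum_(i < p.-1) y ^+ i.
  have e3 : (1 - y) * \sum_(i < p.-1) y ^+ i = 1 - y ^+ p.-1.
    by rewrite -opprB mulNr -subrX1 opprB.
  by rewrite -mulrA e3 mulrBr mulr1 addrC subrK.
rewrite e2; apply: inJD.
  apply: inJM; rewrite /y exprNn exprMn mulrCA mulrC; apply: inJg.
rewrite e1 mulrBl; apply: inJD; first by rewrite mulrC; apply: inJPhi.
by apply: inJN; rewrite mulrC; apply: inJg.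
Qed.

Lemma pi_p : inJ p (pP p) (piZ ^+ p.-1).
Proof.
have [T hT] := @Phi_expand p pp op.
have -> : piZ ^+ p.-1 = Phi p - (pP p + pP p * piZ * T).
  by rewrite -hT [pP p + _]addrC -[X in X - _]addrA addrK.
apply: inJD; first by rewrite -[Phi p]mul1r; apply: inJPhi.
have -> : pP p + pP p * piZ * T = (1 + piZ * T) * pP p by rewrite mulrDl mul1r [_ * pP p]mulrC mulrA.
apply: inJN; apply: inJg.
Qed.
End Keys.


Lemma piZ_eq : piZ = - ('X - 1%:P).
Proof. by rewrite /piZ opprB polyC1. Qed.

Lemma piZ_neq0 : piZ != 0.
Proof. by rewrite piZ_eq oppr_eq0 polyXsubC_eq0. Qed.

Lemma horner_pi : piZ.[1] = 0 :> int.
Proof. by rewrite /piZ hornerD hornerN hornerX -polyC1 hornerC subrr. Qed.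

Lemma horner_Phi p : (Phi p).[1] = p%:R :> int.
Proof. by rewrite /Phi horner_sum; under eq_bigr do rewrite hornerXn expr1n; rewrite sumr_const card_ord. Qed.

Lemma cg_res p k q : congr_at p k piZ q (q.[1])%:P.
Proof.
have : root (q - (q.[1])%:P) 1 by rewrite rootE hornerD hornerN hornerC subrr.
case/factor_theorem => r hr; apply/cgE; rewrite hr.
exists (- r), 0, 0; rewrite !mul0r !addr0 piZ_eq mulrNN polyC1 //.
Qed.

Lemma cg_res_eq p k q1 q2 : q1.[1] = q2.[1] -> congr_at p k piZ q1 q2.
Proof. by move=> e; apply: cg_trans (cg_res _ _ _) _; rewrite e; apply: cg_sym; apply: cg_res. Qed.

Lemma inJ_PK p k g f : inJ p (PK p k) f -> inI p k g f.
Proof. by move=> [a [c ->]]; apply: inID; [apply: inIP | apply: inIPhi]. Qed.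

Section Keys2.
Variables (p : nat) (pp : prime p) (op : odd p).

Lemma p_gt0 : (0 < p)%N. Proof. exact: prime_gt0. Qed.
Lemma p_ge3 : (3 <= p)%N.
Proof.
by rewrite ltn_neqAle prime_gt1 // andbT; apply/eqP => e; move: op; rewrite -e.
Qed.

Lemma p_pi1 : inJ p piZ (pP p).
Proof.
apply: inJ_trans (@inJ_pow p 1 p.-1 _) (@p_pi p pp op).
by rewrite -subn1 subn_gt0 prime_gt1.
Qed.

Lemma p_pipi : inJ p (piZ ^+ p) (pP p * piZ).
Proof.
have -> : piZ ^+ p = piZ ^+ p.-1 * piZ by rewrite -exprSr prednK // p_gt0.
apply: inJMM (@p_pi p pp op) _; by exists 1, 0; rewrite mul1r mul0r addr0.
Qed.

Lemma D6 k : congr_at p k (piZ ^+ p) (pP p) (- piZ ^+ p.-1).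
Proof.
have [T hT] := @Phi_expand p pp op.
apply/cgE; rewrite opprK.
have -> : pP p + piZ ^+ p.-1 = 1 * Phi p - pP p * piZ * T by rewrite mul1r -hT addrK.
apply: inIB; first exact: inIPhi.
by apply: inIMr; apply: inJ_inI; apply: p_pipi.
Qed.

Lemma PK_pi k : inJ p (piZ ^+ (p.-1 * k)) (PK p k).
Proof.
by rewrite exprM natrX polyC_exp; apply: inJX; apply: p_pi.
Qed.

Lemma pi_PK k : inJ p (PK p k) (piZ ^+ (p.-1 * k)).
Proof.
by rewrite exprM natrX polyC_exp; apply: inJX; apply: pi_p.
Qed.

Lemma pi_zero k g n c : (p.-1 * k <= n)%N -> inI p k g (piZ ^+ n * c).
Proof.
move=> hn; apply: inIMr; apply: inJ_PK.
by apply: inJ_trans (pi_PK k) _; apply: inJ_pow.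
Qed.

Lemma pcg k : congr_at p k piZ (pP p) 0.
Proof. by apply/cgE; rewrite subr0; apply: inJ_inI; apply: p_pi1. Qed.

Lemma Phi_cancel G H : piZ * G = H * Phi p -> exists H', G = H' * Phi p.
Proof.
move=> e.
have h1 : H.[1] = 0.
  have := congr1 (horner^~ 1) e; rewrite !hornerM horner_pi mul0r horner_Phi.
  move/esym/eqP; rewrite mulf_eq0 pnatr_eq0 => /orP [/eqP //|].
  by rewrite gtn_eqF // p_gt0.
have : root H 1 by apply/rootP.
case/factor_theorem => r hr.
exists (- r); apply: (mulfI piZ_neq0).
by rewrite e hr piZ_eq polyC1 mulNr mulNr mulrN opprK mulrA [r * _]mulrC.
Qed.

Lemma Phi_cancel_n n G H : piZ ^+ n * G = H * Phi p -> exists H', G = H' * Phi p.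
Proof.
elim: n G H => [|n IH] G H; first by rewrite expr0 mul1r => ->; exists H.
rewrite exprS -mulrA => /Phi_cancel [H' e]; exact: IH e.
Qed.

Lemma helper_add (x y z w : {poly int}) : x + (y + z) + w - (x + y) = w + z.
Proof. by rewrite addrA -[x + y + z + w]addrA [x + y + _]addrC addrK addrC. Qed.

Lemma cancel_pi k n A : (n.+1 <= p.-1 * k)%N ->
  congr_at p k (piZ ^+ n.+1) (piZ ^+ n * A) 0 -> congr_at p k piZ A 0.
Proof.
move=> hn /cgE; rewrite subr0 => [[a [b [c e]]]].
have [u [v ev]] := PK_pi k.
set N := (p.-1 * k)%N in hn ev.
have eN : piZ ^+ N = piZ ^+ n * piZ ^+ (N - n) by rewrite -exprD subnKC // ltnW.
set X := a * piZ + b * u * piZ ^+ (N - n).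
have e2 : piZ ^+ n * (A - X) = (c + b * v) * Phi p.
  rewrite mulrBr e /X ev mulrDr mulrDr (mulrCA _ a) -exprSr (mulrCA _ (b * u)) -eN.
  by rewrite mulrDl -[b * v * _]mulrA [b * (u * _)]mulrA helper_add.
have [H' eH] := @Phi_cancel_n n _ _ e2.
apply/cgE; rewrite subr0.
have -> : A = (A - X) + X by rewrite subrK.
apply: inID; first by rewrite eH; apply: inIPhi.
apply: inID; first exact: inIg.
apply: inIM; apply: (@inI_pow p k 1 (N - n)); by rewrite subn_gt0.
Qed.

End Keys2.


Lemma yexp m c n : (piZ ^+ m * c) ^+ n = piZ ^+ (m * n) * c ^+ n.
Proof. by rewrite exprMn exprM. Qed.

Lemma cg_1pi p k g f : congr_at p k g f 1 -> congr_at p k g (f * f) 1.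
Proof. by move=> h; rewrite -[1]mulr1; apply: cg_mul. Qed.

Lemma cg_exp1 p k g f n : congr_at p k g f 1 -> congr_at p k g (f ^+ n) 1.
Proof. by move=> h; rewrite -(expr1n _ n); apply: cg_exp. Qed.

Lemma inIMn p k g f n : inI p k g f -> inI p k g (f *+ n).
Proof. by rewrite -mulr_natl; apply: inIM. Qed.

Lemma expand p k m beta c : prime p -> odd p -> (2 <= m)%N ->
  congr_at p k piZ beta 1 ->
  congr_at p k (piZ ^+ (m + p)) ((beta + piZ ^+ m * c) ^+ p)
     (beta ^+ p - piZ ^+ (m + p.-1) * c).
Proof.
move=> pp op hm hb.
have p3 := @p_ge3 p pp op.
rewrite [(beta + _) ^+ _]exprDn.
case: p pp op p3 hb => [|p'] // pp op p3 hb.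
rewrite big_ord_recl big_ord_recl /=.
rewrite -[X in congr_at _ _ _ _ X]addr0 -[X in congr_at _ _ _ _ X]addrA.
apply: cg_add; first by rewrite subn0 expr0 mulr1 bin0 mulr1n; apply: cg_refl.
apply: cg_add.
  rewrite /bump /= subn1 /= expr1 bin1 -mulr_natl -polyC_natr.
  have e1 : congr_at p'.+1 k (piZ ^+ (m + p'.+1)) (pP p'.+1 * piZ ^+ m) (- piZ ^+ (m + p')).
    have -> : piZ ^+ (m + p'.+1) = piZ ^+ p'.+1 * piZ ^+ m by rewrite addnC exprD.
    have -> : - piZ ^+ (m + p') = - piZ ^+ p' * piZ ^+ m by rewrite addnC exprD mulNr.
    apply: cg_mulg; exact: (@D6 _ pp op).
  have e2 : congr_at p'.+1 k (piZ ^+ (m + p'.+1)) (beta ^+ p' * piZ ^+ (m + p')) (piZ ^+ (m + p')).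
    rewrite addnS exprS -[X in congr_at _ _ _ _ X]mul1r; apply: cg_mulg.
    by apply: cg_exp1.
  apply: (@cg_trans _ _ _ _ (- (beta ^+ p' * piZ ^+ (m + p')) * c)).
    have -> : pP p'.+1 * (beta ^+ p' * (piZ ^+ m * c)) = (pP p'.+1 * piZ ^+ m) * (beta ^+ p' * c).
      by rewrite [beta ^+ p' * _]mulrCA; exact: mulrA.
    have -> : - (beta ^+ p' * piZ ^+ (m + p')) * c = (- piZ ^+ (m + p')) * (beta ^+ p' * c).
      by rewrite !mulNr [beta ^+ p' * _]mulrC mulrA.
    by apply: cg_mul e1 (cg_refl _ _ _ _).
  rewrite mulNr; apply: cg_opp; apply: cg_mul; [exact: e2 | exact: cg_refl].
apply/cgE; rewrite subr0; apply: inI_sum => i _.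
rewrite /bump /= !add1n yexp.
case: (ltnP i.+2 p'.+1) => hi.
  have hd : (p'.+1 %| 'C(p'.+1, i.+2))%N by apply: prime_dvd_bin.
  rewrite -(divnK hd) mulrnA mulrnAC; apply: inIMn.
  rewrite -mulr_natl -polyC_natr mulrCA; apply: inIM; rewrite mulrA; apply: inIMr.
  apply: inJ_inI.
  apply: (@inJ_trans _ (piZ ^+ p' * piZ ^+ (m * i.+2))).
    rewrite -exprD; apply: inJ_pow; rewrite [(m + _)%N]addnC addSn ltn_add2l.
    apply: (@leq_trans (m * 2)); last by apply: leq_mul.
    by rewrite muln2 -addnn -addn1 leq_add2l ltnW.
  apply: inJMM; first exact: (@p_pi _ pp op).
  by rewrite -[X in inJ _ _ X]mul1r; apply: inJg.
have ei : i.+2 = p'.+1.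
  by apply/eqP; rewrite eqn_leq hi andbT; have := ltn_ord i; rewrite ltnS.
rewrite ei; apply: inIMn; apply: inIM; apply: inIMr; apply: inI_pow.
rewrite mulnS leq_add2l; apply: leq_trans (leq_mul hm (leqnn p')).
by rewrite mul2n -addnn -add1n leq_add2r; move: p3; rewrite ltnS => /ltnW.
Qed.


Lemma cg_sym_sub p k g f h : congr_at p k g (f - h) 0 -> congr_at p k g f h.
Proof. by move/cgE; rewrite subr0 => H; apply/cgE. Qed.

Lemma cg_sub0 p k g f h : congr_at p k g f h -> congr_at p k g (f - h) 0.
Proof. by move/cgE=> H; apply/cgE; rewrite subr0. Qed.

Lemma cg_pi_mul p k n f : congr_at p k piZ f 0 -> congr_at p k (piZ ^+ n.+1) (piZ ^+ n * f) 0.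
Proof.
move=> h; rewrite exprS -(mul0r (piZ ^+ n)) [piZ ^+ n * f]mulrC; exact: cg_mulg.
Qed.

Lemma cg_pi1 p k n f : congr_at p k (piZ ^+ n.+1) f 1 -> congr_at p k piZ f 1.
Proof. by apply: (@cg_pow p k 1 n.+1). Qed.

Lemma uniq_root p k beta gamma : prime p -> odd p ->
  congr_at p k (piZ ^+ 2) beta 1 -> congr_at p k (piZ ^+ 2) gamma 1 ->
  congr_at p k 0 (gamma ^+ p) (beta ^+ p) ->
  forall d, (d.+2 + p <= (p.-1 * k).+1)%N -> congr_at p k (piZ ^+ d.+2) gamma beta.
Proof.
move=> pp op hb hg hgb; elim => [|d IH] hd.
  by apply: cg_trans hg _; apply: cg_sym.
have /cgE [a [b [c e]]] := IH (leq_trans (leqnSn _) hd).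
have h1 : congr_at p k 0 gamma (beta + piZ ^+ d.+2 * a).
  apply/cgE; exists 0, b, c; rewrite mul0r add0r.
  have -> : gamma - (beta + piZ ^+ d.+2 * a) = (gamma - beta) - a * piZ ^+ d.+2 by rewrite opprD addrA mulrC.
  by rewrite e addrAC [a * _ + _]addrC addrK.
have h2 : congr_at p k (piZ ^+ (d.+2 + p)) (gamma ^+ p) (beta ^+ p - piZ ^+ (d.+2 + p.-1) * a).
  have h1' := cg_0g (piZ ^+ (d.+2 + p)) h1.
  apply: cg_trans (cg_exp p h1') _.
  by apply: expand => //; apply: cg_pi1 hb.
have h3 : congr_at p k (piZ ^+ (d.+2 + p)) (piZ ^+ (d.+2 + p.-1) * a) 0.
  have := cg_sub (cg_refl p k (piZ ^+ (d.+2 + p)) (beta ^+ p)) (cg_trans (cg_sym h2) (cg_0g _ hgb)).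
  by rewrite opprB addrC subrK subrr.
have hp : (d.+2 + p = (d.+2 + p.-1).+1)%N by rewrite -addnS prednK // prime_gt0.
rewrite hp in h3.
have h5 : congr_at p k piZ a 0.
  by apply: (@cancel_pi p pp op k (d.+2 + p.-1) a _ h3); rewrite -hp.
apply: cg_trans (cg_0g _ h1) _.
rewrite -[X in congr_at _ _ _ _ X]addr0; apply: cg_add; first exact: cg_refl.
exact: cg_pi_mul.
Qed.

Lemma hensel p k alpha : prime p -> odd p ->
  congr_at p k (piZ ^+ p.+1) alpha 1 ->
  forall j, exists beta, congr_at p k (piZ ^+ 2) beta 1 /\
     congr_at p k (piZ ^+ (j + p.+1)) (beta ^+ p) alpha.
Proof.
move=> pp op ha; elim => [|j [beta [h1 h2]]].
  by exists 1; split; [exact: cg_refl | rewrite expr1n add0n; exact: cg_sym].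
have hp : (j + p.+1 = j.+2 + p.-1)%N by rewrite !addSn -addnS prednK ?prime_gt0 // addnS.
rewrite hp in h2.
have /cgE [d [b [c e]]] := cg_sym h2.
exists (beta + piZ ^+ j.+2 * (- d)); split.
  rewrite -[1]addr0; apply: cg_add => //.
  by apply/cgE; rewrite subr0; apply: inIMr; apply: inI_pow.
have hx := @expand p k j.+2 beta (- d) pp op isT (@cg_pi1 _ _ 1 _ h1).
have -> : (j.+1 + p.+1 = j.+2 + p)%N by rewrite !addSn !addnS.
apply: cg_trans hx _.
rewrite mulrN opprK; apply: cg_0g; apply/cgE.
exists 0, (- b), (- c); rewrite mul0r add0r !mulNr.
have e' : alpha - (beta ^+ p + piZ ^+ (j.+2 + p.-1) * d) = b * PK p k + c * Phi p.
  by rewrite opprD addrA e [piZ ^+ _ * d]mulrC addrAC [d * _ + _]addrC addrK.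
by rewrite -opprB e' opprD.
Qed.

Lemma root_exists p k alpha : prime p -> odd p ->
  congr_at p k (piZ ^+ p.+1) alpha 1 ->
  exists beta, congr_at p k (piZ ^+ 2) beta 1 /\ congr_at p k 0 (beta ^+ p) alpha.
Proof.
move=> pp op ha.
have [beta [h1 h2]] := @hensel p k alpha pp op ha (p.-1 * k).
exists beta; split => //; apply: cg_ideal h2.
rewrite -[X in inI _ _ _ X]mulr1; apply: (@pi_zero p pp op) => //; exact: leq_addr.
Qed.


Definition brk (j : nat) : {poly int} := \sum_(i < j) 'X^i.

Lemma brk_eq j : 1 - 'X^j = piZ * brk j.
Proof. by rewrite /piZ /brk -opprB subrX1 -mulNr opprB. Qed.

Lemma horner_natr n (x : int) : ((n%:R : {poly int})).[x] = n%:R.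
Proof. by rewrite hornerMn -polyC1 hornerC. Qed.

Lemma horner_brk j : (brk j).[1] = j%:R.
Proof. by rewrite /brk horner_sum; under eq_bigr do rewrite hornerXn expr1n; rewrite sumr_const card_ord. Qed.

Lemma comp1 (q : {poly int}) : 1 \Po q = 1.
Proof. by rewrite -polyC1 comp_polyC. Qed.

Lemma comp_form n j y :
  (1 + piZ ^+ n * y) \Po 'X^j = 1 + piZ ^+ n * (brk j ^+ n * (y \Po 'X^j)).
Proof.
rewrite comp_polyD comp1 comp_polyM comp_polyXn.
have -> : piZ \Po 'X^j = 1 - 'X^j by rewrite /piZ comp_polyB comp1 comp_polyX.
by rewrite brk_eq exprMn mulrA.
Qed.

Lemma horner_compXn (y : {poly int}) j : (y \Po 'X^j).[1] = y.[1].
Proof. by rewrite horner_comp hornerXn expr1n. Qed.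

Lemma cg_sum_seq p k g (r : seq nat) (F G : nat -> {poly int}) :
  (forall i, i \in r -> congr_at p k g (F i) (G i)) ->
  congr_at p k g (\sum_(i <- r) F i) (\sum_(i <- r) G i).
Proof.
move=> h; rewrite big_seq [X in congr_at _ _ _ _ X]big_seq.
by apply: cg_sum => i /h.
Qed.

Lemma cg_prod_seq p k g (r : seq nat) (F G : nat -> {poly int}) :
  (forall i, i \in r -> congr_at p k g (F i) (G i)) ->
  congr_at p k g (\prod_(i <- r) F i) (\prod_(i <- r) G i).
Proof.
move=> h; rewrite big_seq [X in congr_at _ _ _ _ X]big_seq.
by apply: cg_prod => i /h.
Qed.

Lemma prod_lin p k n (r : seq nat) (z : nat -> {poly int}) :
  congr_at p k (piZ ^+ (n + n)) (\prod_(j <- r) (1 + piZ ^+ n * z j))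
     (1 + piZ ^+ n * \sum_(j <- r) z j).
Proof.
apply: (big_ind2 (fun u s => congr_at p k (piZ ^+ (n + n)) u (1 + piZ ^+ n * s))).
- by rewrite mulr0 addr0; apply: cg_refl.
- move=> u1 s1 u2 s2 h1 h2.
  apply: cg_trans (cg_mul h1 h2) _.
  set A := piZ ^+ n.
  have -> : (1 + A * s1) * (1 + A * s2) = 1 + A * (s1 + s2) + piZ ^+ (n + n) * (s1 * s2).
    rewrite mulrDl mul1r mulrDr mulr1 addrA -[1 + A * s2 + _]addrA [A * s2 + _]addrC.
    by rewrite -mulrDr mulrACA /A -exprD.
  rewrite -[X in congr_at _ _ _ _ X]addr0; apply: cg_add; first exact: cg_refl.
  by apply/cgE; rewrite subr0 mulrC; apply: inIg.
- by move=> j _; apply: cg_refl.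
Qed.

Lemma fermat_pm1 p j : prime p -> (0 < j < p)%N -> exists q, (j ^ p.-1 = 1 + p * q)%N.
Proof.
move=> pp /andP [j0 jp].
have p0 := prime_gt0 pp.
have hf := fermat_little j pp.
have hle : (j <= j ^ p)%N by rewrite -{1}(expn1 j) leq_pexp2l // prime_gt0.
move: hf => /eqP; rewrite eqn_mod_dvd //.
have -> : (j ^ p = j * j ^ p.-1)%N by rewrite -expnS prednK.
have -> : (j * j ^ p.-1 - j = j * (j ^ p.-1 - 1))%N by rewrite mulnBr muln1.
rewrite Gauss_dvdr; last by rewrite prime_coprime // gtnNdvd.
move=> hd; exists ((j ^ p.-1 - 1) %/ p)%N.
rewrite mulnC divnK // addnC subnK //.
by rewrite expn_gt0 j0.
Qed.

Lemma bound1 p K : (3 <= p)%N -> (2 <= K)%N -> (p.+1 <= p.-1 * K)%N.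
Proof.
case: p => [|[|[|q]]] // _ hK; apply: leq_trans (leq_mul (leqnn _) hK).
by rewrite /= muln2 -addnn !addnS !addSn !ltnS leq_addr.
Qed.

Lemma cg_half p k w : prime p -> odd p -> congr_at p k piZ (w + w) 0 -> congr_at p k piZ w 0.
Proof.
move=> pp op h.
have hh : (uphalf p * 2 = p.+1)%N.
  by rewrite uphalf_half op mulnDl mul1n muln2 halfK op subn1 add2n prednK // prime_gt0.
have e : (uphalf p)%:R * (w + w) = pP p * w + w.
  rewrite -mulr2n mulrnAr -mulrnAl -mulr_natr -natrM hh mulrS mulrDl mul1r addrC.
  by rewrite polyC_natr.
have -> : w = (uphalf p)%:R * (w + w) - pP p * w by rewrite e [pP p * w + w]addrC addrK.
rewrite -[0]subr0; apply: cg_sub.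
  by rewrite -(mulr0 ((uphalf p)%:R)); apply: cg_mull.
by rewrite -(mul0r w); apply: cg_mul; [exact: (@pcg p pp op) | exact: cg_refl].
Qed.

Lemma cg_decomp p k n f : congr_at p k (piZ ^+ n) f 1 ->
  exists y, congr_at p k 0 f (1 + piZ ^+ n * y).
Proof.
move=> /cgE [y [b [c e]]]; exists y; apply/cgE; exists 0, b, c; rewrite mul0r add0r.
by rewrite opprD addrA e [piZ ^+ _ * y]mulrC addrAC [y * _ + _]addrC addrK.
Qed.

Lemma partA p K f : prime p -> odd p -> (2 <= K)%N ->
  congr_at p K (piZ ^+ p.-1) f 1 ->
  congr_at p K 0 (f \Po 'X^(p.-1)) f ->
  congr_at p K (pP p * piZ) (\prod_(1 <= j < p) (f \Po 'X^j)) 1 ->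
  congr_at p K (piZ ^+ p.+1) f 1.
Proof.
move=> pp op hK h1 h2 h3.
have p3 := @p_ge3 p pp op.
have p0 := prime_gt0 pp.
have hb := @bound1 p K p3 hK.
have [y hf0] := @cg_decomp _ _ _ _ h1.
pose z j := brk j ^+ p.-1 * (y \Po 'X^j).
have hz : forall j, j \in index_iota 1 p ->
    congr_at p K 0 (f \Po 'X^j) (1 + piZ ^+ p.-1 * z j).
  move=> j; rewrite mem_index_iota => hj.
  have := @cg_comp p K 0 f _ j pp hj hf0.
  by rewrite comp_poly0 comp_form.
have hprod : congr_at p K (piZ ^+ p) (\prod_(1 <= j < p) (f \Po 'X^j))
     (1 + piZ ^+ p.-1 * \sum_(1 <= j < p) z j).
  apply: cg_trans (cg_0g _ ((@cg_prod_seq _ _ _ _ _ _ hz))) _.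
  apply: (@cg_pow p K p (p.-1 + p.-1)); last exact: prod_lin.
  by rewrite -{1}(prednK p0) -addn1 leq_add2l -subn1 subn_gt0 prime_gt1.
have h3' : congr_at p K (piZ ^+ p) (\prod_(1 <= j < p) (f \Po 'X^j)) 1.
  by apply: cg_ideal h3; apply: inJ_inI; apply: (@p_pipi p pp op).
have hS0 : congr_at p K (piZ ^+ p.-1.+1) (piZ ^+ p.-1 * \sum_(1 <= j < p) z j) 0.
  rewrite prednK //.
  have := cg_sub (cg_trans (cg_sym hprod) h3') (cg_refl p K (piZ ^+ p) 1).
  by rewrite addrC addKr subrr.
have hS : congr_at p K piZ (\sum_(1 <= j < p) z j) 0.
  apply: (@cancel_pi p pp op K p.-1 _ _ hS0).
  by rewrite prednK //; apply: leq_trans (leqnSn _) hb.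
have pc : congr_at p K piZ (p%:R : {poly int}) 0 by rewrite -polyC_natr; exact: (@pcg p pp op).
have hzy : forall j, j \in index_iota 1 p -> congr_at p K piZ (z j) y.
  move=> j; rewrite mem_index_iota => hj.
  have [q hq] := @fermat_pm1 p j pp hj.
  apply: (@cg_trans _ _ _ _ ((j ^ p.-1)%:R * y)).
    apply: cg_res_eq.
    by rewrite /z !hornerM horner_exp horner_brk horner_compXn horner_natr natrX.
  rewrite hq natrD mulrDl mul1r -[X in congr_at _ _ _ _ X]addr0.
  apply: cg_add; first exact: cg_refl.
  rewrite natrM -mulrA -(mul0r (q%:R * y)); apply: cg_mul => //; exact: cg_refl.
have hsum : congr_at p K piZ (\sum_(1 <= j < p) z j) (y *+ p.-1).
  apply: cg_trans (@cg_sum_seq _ _ _ _ _ _ hzy) _.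
  rewrite sumr_const_nat subn1; exact: cg_refl.
have hy : congr_at p K piZ y 0.
  have -> : y = y *+ p - y *+ p.-1.
    by rewrite -{1}(prednK p0) mulrSr [_ + y]addrC addrK.
  rewrite -[0]subr0; apply: cg_sub.
    rewrite -mulr_natl -(mul0r y); apply: cg_mul => //; exact: cg_refl.
  exact: cg_trans (cg_sym hsum) hS.
have hfp : congr_at p K (piZ ^+ p) f 1.
  apply: cg_trans (cg_0g _ hf0) _; rewrite -[X in congr_at _ _ _ _ X]addr0.
  apply: cg_add; first exact: cg_refl.
  by have := @cg_pi_mul p K p.-1 y hy; rewrite prednK.
have [w hf1] := @cg_decomp _ _ _ _ hfp.
have hj : (0 < p.-1 < p)%N by rewrite ltn_predL p0 andbT -subn1 subn_gt0 prime_gt1.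
have hc : congr_at p K 0 (1 + piZ ^+ p * (brk p.-1 ^+ p * (w \Po 'X^(p.-1)))) (1 + piZ ^+ p * w).
  rewrite -comp_form.
  have hcf := @cg_comp p K 0 f _ (p.-1) pp hj hf1; rewrite comp_poly0 in hcf.
  apply: cg_trans (cg_sym hcf) _; exact: cg_trans h2 hf1.
have hV : congr_at p K piZ (brk p.-1 ^+ p * (w \Po 'X^(p.-1)) - w) 0.
  have hd := cg_sub (cg_0g (piZ ^+ p.+1) hc) (cg_refl p K (piZ ^+ p.+1) (1 + piZ ^+ p * w)).
  rewrite subrr opprD addrACA subrr add0r -mulrBr in hd.
  exact: (@cancel_pi p pp op K p _ hb hd).
have hm1 : congr_at p K piZ ((p.-1)%:R : {poly int}) (-1).
  rewrite -subn1 natrB // -[X in congr_at _ _ _ _ X]sub0r; apply: cg_sub => //; exact: cg_refl.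
have hV2 : congr_at p K piZ (brk p.-1 ^+ p * (w \Po 'X^(p.-1)) - w) (- (w + w)).
  apply: (@cg_trans _ _ _ _ (((p.-1)%:R) ^+ p * w - w)).
    apply: cg_res_eq.
    by rewrite !hornerD !hornerN !hornerM !horner_exp horner_brk horner_compXn horner_natr.
  rewrite opprD; apply: cg_add; last exact: cg_refl.
  rewrite -mulN1r; apply: cg_mul; last exact: cg_refl.
  have := cg_exp p hm1; by rewrite -signr_odd op expr1.
have hw2 : congr_at p K piZ (w + w) 0.
  have := cg_opp (cg_trans (cg_sym hV2) hV); by rewrite opprK oppr0.
have hw := @cg_half p K w pp op hw2.
apply: cg_trans (cg_0g _ hf1) _; rewrite -[X in congr_at _ _ _ _ X]addr0.
apply: cg_add; first exact: cg_refl.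
exact: cg_pi_mul.
Qed.


Lemma elt_lev p a : is_elt p a -> forall k j, congr_at p k 0 (a (j + k)%N) (a k).
Proof.
move=> ha k; elim => [|j IH]; first exact: cg_refl.
apply: cg_trans _ IH; apply: (@cg_lev p k (j + k)%N _ _ _ (leq_addl _ _)); exact: ha.
Qed.

Lemma cg_level0 p g f h : congr_at p 0 g f h.
Proof. by apply/cgE; apply: inI_lev0. Qed.

Theorem mainTheorem7 (p : nat) (hp : prime p) (hodd : odd p)
  (a : nat -> {poly int}) (ha : is_elt p a)
  (hU : inU p p.-1 a) (hK : inKplus p a)
  (hN : ocong p ((p%:R : int)%:P * piZ) (normK p a) (fun _ => 1)) :
  inU p p.+1 a /\
  (exists b : nat -> {poly int},
     is_elt p b /\ ounit p b /\ oeq p (fun k => b k ^+ p) a).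
Proof.
have p3 := @p_ge3 p hp hodd.
case: hU => hunit hU1.
have hA : forall k, congr_at p k (piZ ^+ p.+1) (a k) 1.
  move=> k.
  have h := @partA p k.+2 (a k.+2) hp hodd isT (hU1 k.+2) (hK k.+2) (hN k.+2).
  apply: cg_trans _ (cg_lev (leqnSn _) (cg_lev (leqnSn _) h)).
  apply: cg_0g; apply: cg_sym; exact: (@elt_lev p a ha k 2).
split; first by split.
have Hb : forall k, {beta | congr_at p k.+1 (piZ ^+ 2) beta 1 /\ congr_at p k.+1 0 (beta ^+ p) (a k.+1)}.
  move=> k; apply: constructive_indefinite_description; exact: root_exists.
pose b k := sval (Hb k).
have hb1 : forall k, congr_at p k.+1 (piZ ^+ 2) (b k) 1 by move=> k; case: (svalP (Hb k)).
have hb2 : forall k, congr_at p k.+1 0 (b k ^+ p) (a k.+1) by move=> k; case: (svalP (Hb k)).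
have hbe : is_elt p b.
  move=> k; case: k => [|k]; first exact: cg_level0.
  have hgb : congr_at p k.+2 0 (b k.+2 ^+ p) (b k.+1 ^+ p).
    apply: cg_trans (cg_lev (leqnSn _) (hb2 k.+2)) _; apply: cg_trans (ha k.+2) _.
    apply: cg_sym; exact: hb2.
  have h2le : (2 <= p.-1 * k.+1)%N.
    by apply: leq_trans (leq_pmulr _ _); rewrite // -subn1 ltn_subRL.
  have hu := @uniq_root p k.+2 (b k.+1) (b k.+2) hp hodd (hb1 k.+1)
     (cg_lev (leqnSn _) (hb1 k.+2)) hgb (p.-1 * k.+1 - 2)%N.
  have e : ((p.-1 * k.+1 - 2).+2 = p.-1 * k.+1)%N by rewrite -addn2 subnK.
  rewrite e in hu.
  have hbound : (p.-1 * k.+1 + p <= (p.-1 * k.+2).+1)%N.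
    by rewrite [(p.-1 * k.+2)%N]mulnSr -addnS prednK ?prime_gt0.
  have hu' := cg_lev (leqnSn _) (hu hbound).
  apply: cg_ideal hu'.
  rewrite -[X in inI _ _ _ X]mulr1; exact: (@pi_zero p hp hodd).
exists b; split => //; split.
  have [e [he hae]] := hunit.
  exists (fun k => b k ^+ p.-1 * e k); split.
    by move=> k; apply: cg_mul; [apply: cg_exp; exact: hbe | exact: he].
  move=> k; rewrite mulrA -exprS prednK ?prime_gt0 //.
  apply: cg_trans _ (hae k); apply: cg_mul; last exact: cg_refl.
  apply: cg_trans (cg_lev (leqnSn _) (hb2 k)) _; exact: ha.
move=> k; apply: cg_trans (cg_lev (leqnSn _) (hb2 k)) _; exact: ha.
Qed.
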